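(* For every integer $n\ge 2$, $$\sum_{\substack{b\ge 1,\ k\ge 0\\ 2b+k=n}} \#\mathrm{SYT}^{+k}\big((b,b)\big) = \mathrm{Cat}(n-1),$$ where $\mathrm{Cat}(m)=\frac{1}{m+1}\binom{2m}{m}$ is the $m$-th Catalan number.
   Context: For a partition $\lambda$ of $N$ (identified with its Ferrers diagram, cells in matrix coordinates $(\text{row},\text{column})$) and an integer $k\ge 0$, $\mathrm{SYT}^{+k}(\lambda)$ denotes the set of set-valued standard Young tableaux of shape $\lambda$ with entries in $[N+k]$: fillings $S$ of the cells of $\lambda$ by nonempty sets of positive integers such that (1) the sets $S(u)$ form a set partition of $[N+k]$, and (2) whenever $u\neq v$ and $u$ is weakly north and weakly west of $v$, $\max S(u)<\min S(v)$. The shape $(b,b)$ is the $2\times b$ rectangle. *)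

(* Defs.v *)
From mathcomp Require Import all_boot.
Set Implicit Arguments. Unset Strict Implicit. Unset Printing Implicit Defensive.

(* A partition lambda is a weakly decreasing seq nat of positive parts,
   lambda = [:: lambda_1; lambda_2; ...].  Its Ferrers diagram lives inside the
   bounding box 'I_(size lambda) * 'I_(lambda_1); cell (i,j) (0-based row i,
   column j) belongs to the diagram iff j < lambda_i. *)
Definition cellT (la : seq nat) : finType := ('I_(size la) * 'I_(head 0 la))%type.

Definition in_diagram (la : seq nat) (u : cellT la) : bool :=
  (u.2 : nat) < nth 0 la u.1.

(* Entries: the integer x+1 of [N+k] is encoded by x : 'I_(N+k)
   (order preserving, so comparisons are unaffected). *)
Definition entryT (la : seq nat) (k : nat) : finType := 'I_(sumn la + k).

(* Set-valued standard Young tableau of shape la with entries in [N+k]: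
   a filling S of the cells by sets (S u = set0 off the diagram, so fillings
   are identified with functions on the diagram). *)
Definition is_svSYT (la : seq nat) (k : nat)
    (S : {ffun cellT la -> {set entryT la k}}) : bool :=
  [forall u, ~~ in_diagram u ==> (S u == set0)] &&
  [forall u, in_diagram u ==> (S u != set0)] &&
  [forall x, #|[set u | in_diagram u & x \in S u]| == 1] &&
  [forall u, forall v,
     [&& in_diagram u, in_diagram v, u != v,
         (u.1 <= v.1)%N & (u.2 <= v.2)%N] ==>
     [forall a, forall b, (a \in S u) && (b \in S v) ==> (a < b)%N]].

Definition nSVSYT (la : seq nat) (k : nat) : nat :=
  #|[set S : {ffun cellT la -> {set entryT la k}} | is_svSYT S]|.

(* Catalan numbers: Cat m = binom(2m, m) / (m+1) (exact division). *)
Definition Catalan (m : nat) : nat := 'C(m.*2, m) %/ m.+1.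

(* Main.v *)
Require Import Defs.
From mathcomp Require Import all_boot.
From mathcomp Require Import zify.
Set Implicit Arguments. Unset Strict Implicit. Unset Printing Implicit Defensive.

Fixpoint P (len s : nat) : nat :=
  if len is l.+1 then P l s.+1 + (if s is s'.+1 then P l s' else 0) else (s == 0).

Lemma P_big l s : l < s -> P l s = 0.
Proof.
elim: l s => [|l IH] [|s] //= H.
rewrite IH; last lia. rewrite IH //; lia.
Qed.

Lemma Pbal len u : u.*2 <= len ->
  P len (len - u.*2) + (if u is u'.+1 then 'C(len, u') else 0) = 'C(len, u).
Proof.
elim: len u => [|len IH] u.
  by case: u.
move=> Hu. case: u Hu => [|u] Hu.
  rewrite subn0 /= P_big // addn0 bin0.
  by have := IH 0 (leq0n _); rewrite subn0 addn0 bin0.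
have Hu' : u.*2 <= len by lia.
have IHu := IH u Hu'.
have E : len.+1 - u.+1.*2 = len - u.*2 - 1 by lia.
rewrite E binS.
case: (ltnP (u.+1.*2) len.+1) => H2.
- have IHu1 := IH u.+1 (ltnSE H2).
  have -> : len - u.*2 - 1 = (len - u.+1.*2).+1 by lia.
  rewrite /=.
  have -> : (len - u.+1.*2).+2 = len - u.*2 by lia.
  case: u IHu IHu1 {Hu Hu' E H2} => [|u] IHu IHu1.
    rewrite ?bin0 ?double0 ?subn0 in IHu IHu1 *. lia.
  rewrite binS. lia.
- have Hlen : len = u.*2.+1 by lia.
  have -> : len - u.*2 - 1 = 0 by lia.
  rewrite /= addn0.
  have -> : 1 = len - u.*2 by lia.
  have Hsym : 'C(len, u.+1) = 'C(len, u).
    by rewrite -(bin_sub (n:=len) (m:=u)) ?Hlen; [congr 'C(_,_); lia | lia].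
  case: u IHu Hu Hu' E H2 Hlen Hsym => [|u] IHu Hu Hu' E H2 Hlen Hsym.
    rewrite ?bin0 ?double0 ?subn0 in IHu Hsym *. lia.
  rewrite binS. lia.
Qed.


Lemma P_cat m : P (m.*2.+2) 0 = Catalan m.+1.
Proof.
have H := Pbal (len := m.*2.+2) (u := m.+1) (leqnn _).
rewrite subnn in H.
have H2 := mul_bin_left (m.*2.+2) m.
rewrite (_ : m.*2.+2 - m = m.+2) in H2; last lia.
rewrite /Catalan doubleS.
set X := P _ 0 in H *.
have -> : 'C(m.*2.+2, m.+1) = m.+2 * X by nia.
by rewrite mulKn.
Qed.

Fixpoint Wb (b R i j : nat) : nat :=
  if R is R'.+1 then
    (i < b) * Wb b R' i.+1 j + (j < i) * (Wb b R' i j.+1 + Wb b R' i j)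
    + (0 < j) * Wb b R' i j
  else (i == b) && (j == b).

Fixpoint Wu (R i j : nat) : nat :=
  if R is R'.+1 then
    Wu R' i.+1 j + (j < i) * (Wu R' i j.+1 + Wu R' i j) + (0 < j) * Wu R' i j
  else (i == j).

Lemma P_S0 l : P l.+1 0 = P l 1.
Proof. by rewrite /= addn0. Qed.
Lemma P_SS l s : P l.+1 s.+1 = P l s.+2 + P l s.
Proof. by []. Qed.

Lemma Wu_j R i j : j.+1 <= i -> Wu R i j.+1 = P (R.*2) ((i - j.+1).*2).
Proof.
elim: R i j => [|R IH] i j H.
  by rewrite /=; congr nat_of_bool; apply/eqP/eqP; lia.
rewrite [Wu R.+1 _ _]/= (IH i.+1 j); last lia. rewrite (IH i j); last lia.
rewrite (_ : i.+1 - j.+1 = (i - j.+1).+1); last lia.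
case: (ltnP j.+1 i) => H2.
- rewrite IH; last lia.
  rewrite (_ : i - j.+2 = (i - j.+1).-1); last lia.
  have : 0 < i - j.+1 by lia.
  case: (i - j.+1) => [|h] // _.
  rewrite mul1n mul1n /= !doubleS. lia.
- have -> : i - j.+1 = 0 by lia.
  rewrite /= (_ : 1.*2 = 2) // (_ : 0.*2 = 0) //.
  lia.
Qed.

Lemma Wu_S R i j : Wu R.+1 i j =
  Wu R i.+1 j + (j < i) * (Wu R i j.+1 + Wu R i j) + (0 < j) * Wu R i j.
Proof. by []. Qed.

Lemma Wu_0 R i : Wu R.+1 i.+1 0 = P (R.*2.+1) (i.*2.+1).
Proof.
elim: R i => [|R IH] i.
  rewrite /= !mul1n !mul0n. by case: i.
rewrite Wu_S !IH Wu_j // subSS subn0 mul1n mul0n addn0 !doubleS !P_SS. lia.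
Qed.

Lemma Wu_00 m : Wu m.+2 0 0 = P (m.*2.+2) 0.
Proof.
by rewrite Wu_S Wu_0 mul0n mul0n !addn0 double0 P_S0.
Qed.

Lemma Wb_zero1 b R i j : i + R < b -> Wb b R i j = 0.
Proof.
elim: R i j => [|R IH] i j H /=; first by case: eqP => // E; lia.
rewrite !IH; lia.
Qed.

Lemma Wb_zero2 b R i j : i + j + R < b.*2 -> Wb b R i j = 0.
Proof.
elim: R i j => [|R IH] i j H /=.
  case: eqP => // E; case: eqP => // E'; lia.
rewrite !IH; lia.
Qed.

Lemma Wu_sum R i j : j <= i -> Wu R i j = \sum_(i <= b < i + R.+1) Wb b R i j.
Proof.
elim: R i j => [|R IH] i j H.
  rewrite addn1 big_nat1 /=. rewrite eq_refl /=. by case: eqP => [->|/eqP E]; rewrite ?eq_refl // eq_sym (negbTE E).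
rewrite /= !big_split /= -!big_distrr /=.
have E1 : \sum_(i <= b < i + R.+2) (i < b) * Wb b R i.+1 j = Wu R i.+1 j.
  rewrite big_ltn; last lia.
  rewrite ltnn mul0n add0n IH; last lia.
  rewrite (_ : i.+1 + R.+1 = i + R.+2); last lia.
  apply: eq_big_nat => b /andP [Hb _]. by rewrite Hb mul1n.
have E2 : forall jj, jj <= i -> \sum_(i <= b < i + R.+2) Wb b R i jj = Wu R i jj.
  move=> jj Hjj. rewrite addnS big_nat_recr /=; last lia.
  rewrite Wb_zero1 ?addn0 -?IH //. lia.
rewrite E1 E2 //.
case: (ltnP j i) => Hj; last by rewrite !mul0n.
by rewrite big_split /= !E2.
Qed.

Definition sq (T : Type) M (c : 'I_M -> T) : seq T := [seq c i | i <- enum 'I_M].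

Definition hcons (T : finType) M (p : T * {ffun 'I_M -> T}) : {ffun 'I_M.+1 -> T} :=
  [ffun i => if unlift ord0 i is Some j then p.2 j else p.1].

Lemma sq_hcons (T : finType) M (p : T * {ffun 'I_M -> T}) :
  sq (hcons p) = p.1 :: sq p.2.
Proof.
rewrite /sq enum_ordSl /= ffunE unlift_none; congr (_ :: _).
rewrite -map_comp; apply: eq_map => j /=. by rewrite ffunE liftK.
Qed.

Lemma card_split (T : finType) M (Q : seq T -> bool) :
  #|[set c : {ffun 'I_M.+1 -> T} | Q (sq c)]| =
  \sum_(v : T) #|[set c : {ffun 'I_M -> T} | Q (v :: sq c)]|.
Proof.
rewrite -sum1_card.
rewrite (reindex (@hcons T M)) /=; last first.
  exists (fun c : {ffun 'I_M.+1 -> T} => (c ord0, [ffun j => c (lift ord0 j)])).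
    move=> [x g] _ /=. rewrite ffunE unlift_none. congr (_, _).
    by apply/ffunP => j; rewrite !ffunE liftK.
  move=> c _. apply/ffunP => i. rewrite !ffunE /=.
  by case: (unliftP ord0 i) => [j ->|->]; rewrite ?ffunE.
under eq_bigl => p do rewrite inE sq_hcons.
rewrite big_mkcond /=.
rewrite -(pair_bigA _ (fun (x : T) (g : {ffun 'I_M -> T}) => if Q (x :: sq g) then 1 else 0)) /=.
apply: eq_bigr => v _.
rewrite -sum1_card [RHS]big_mkcond /=; apply: eq_bigr => g _; by rewrite inE.
Qed.

Definition cellb (b : nat) : finType := ('I_2 * 'I_b)%type.
Definition ltc b (u v : cellb b) : bool := [&& (u.1 <= v.1)%N, (u.2 <= v.2)%N & u != v].
Fixpoint ok b (D : {set cellb b}) (t : seq (cellb b)) : bool :=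
  if t is v :: t' then [forall u in D, ~~ ltc v u] && ok (v |: D) t' else D == setT.
Definition Kc b M (D : {set cellb b}) :=
  #|[set c : {ffun 'I_M -> cellb b} | ok D (sq c)]|.
Definition Dset b (i j : nat) : {set cellb b} :=
  [set u : cellb b | ((u.1 == 0 :> nat) && (u.2 < i)) || ((u.1 != 0 :> nat) && (u.2 < j))].

Arguments Kc b M D : clear implicits.
Arguments Dset b i j : clear implicits.

Lemma Kc_S b M D : Kc b M.+1 D =
  \sum_(v : cellb b) [forall u in D, ~~ ltc v u] * Kc b M (v |: D).
Proof.
rewrite /Kc card_split; apply: eq_bigr => v _ /=.
case: [forall u in D, ~~ ltc v u]; rewrite ?mul1n ?mul0n //.
by apply/eqP; rewrite cards_eq0; apply/eqP/setP => c; rewrite !inE.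
Qed.

Lemma Kc_0 b D : Kc b 0 D = (D == setT).
Proof.
rewrite /Kc /sq enum_ord0 /=. case: (D == setT).
  by rewrite (_ : [set _ | true] = setT) ?cardsT ?card_ffun ?card_ord ?expn0 //; apply/setP=> c; rewrite !inE.
by apply/eqP; rewrite cards_eq0; apply/eqP/setP => c; rewrite !inE.
Qed.

Lemma ok_inv b D t : @ok b D t ->
  (forall v u, v \in t -> u \in D -> ~~ ltc v u) /\ (forall u, (u \in D) || (u \in t)).
Proof.
elim: t D => [|v t IH] D /=.
  by move=> /eqP ->; split => // u; rewrite inE.
move=> /andP [/forall_inP Hv /IH [H1 H2]]; split.
  move=> v' u; rewrite inE => /orP [/eqP ->|Hv'] Hu; first exact: Hv.
  by apply: H1 => //; rewrite inE Hu orbT.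
move=> u. have := H2 u. rewrite !inE. by case: (u == v); rewrite ?orbT.
Qed.

Lemma Kc_zero b M (D : {set cellb b}) (u w : cellb b) : u \in D -> w \notin D -> ltc w u -> Kc b M D = 0.
Proof.
move=> Hu Hw Hl. apply/eqP; rewrite cards_eq0; apply/eqP/setP => c; rewrite !inE.
apply/negP => /ok_inv [H1 H2].
have := H2 w. rewrite (negbTE Hw) /= => Hwc.
by have := H1 _ _ Hwc Hu; rewrite Hl.
Qed.

Lemma cell_eqE b (u v : cellb b) : (u == v) = ((u.1 : nat) == v.1) && ((u.2 : nat) == v.2).
Proof. by case: u v => [? ?] [? ?]. Qed.

Lemma ltcE b (u v : cellb b) : ltc u v =
  [&& (u.1 <= v.1)%N, (u.2 <= v.2)%N & ((u.1 : nat) != v.1) || ((u.2 : nat) != v.2)].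
Proof. by rewrite /ltc cell_eqE negb_and. Qed.

Lemma inD b i j (u : cellb b) : (u \in Dset b i j) =
  (((u.1 : nat) == 0) && (u.2 < i)) || (((u.1 : nat) != 0) && (u.2 < j)).
Proof. by rewrite inE. Qed.

Lemma inU1 b (u v : cellb b) (A : {set cellb b}) :
  (u \in v |: A) = (((u.1 : nat) == v.1) && ((u.2 : nat) == v.2)) || (u \in A).
Proof. by rewrite in_setU1 cell_eqE. Qed.

Definition gW b M i j (v : cellb b) : nat :=
  if (v.1 : nat) == 0 then
    (v.2 == i :> nat) * Wb b M i.+1 j + ((v.2 : nat).+1 == i) * (j < i) * Wb b M i j
  else (v.2 == j :> nat) * (j < i) * Wb b M i j.+1 + ((v.2 : nat).+1 == j) * Wb b M i j.

Arguments gW b M i j v : clear implicits.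

Ltac cellt := let u := fresh "u" in
  let x := fresh "x" in let y := fresh "y" in
  move=> [[x ?] [y ?]]; rewrite ?inU1 ?inD ?ltcE /=; lia.

Lemma cond_true b (D : {set cellb b}) v :
  (forall u : cellb b, u \in D -> ~~ ltc v u) -> [forall u in D, ~~ ltc v u].
Proof. by move=> H; apply/forall_inP. Qed.

Lemma cond_false b (D : {set cellb b}) v u :
  u \in D -> ltc v u -> [forall u in D, ~~ ltc v u] = false.
Proof. by move=> Hu Hl; apply/negbTE/forall_inPn; exists u => //; rewrite Hl. Qed.

Lemma pt b M i j (v : cellb b)
  (IH : forall i' j', j' <= i' <= b -> Kc b M (Dset b i' j') = Wb b M i' j') :
  j <= i <= b ->
  [forall u in Dset b i j, ~~ ltc v u] * Kc b M (v |: Dset b i j) = gW b M i j v.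
Proof.
move=> Hij. case: v => [[r Hr] [c Hc]]. rewrite /gW /=.
have [Hr0|Hr1] : r = 0 \/ r = 1 by lia.
- subst r. rewrite eq_refl.
  case: (ltngtP c i) => Hci.
  + case: (eqVneq c.+1 i) => Hc1.
    * case: (ltnP j i) => Hji.
      - rewrite cond_true; last by cellt.
        rewrite (_ : _ |: _ = Dset b i j); last by apply/setP; cellt.
        rewrite IH //; lia.
      - rewrite (@cond_false _ _ _ (Ordinal (isT : 1 < 2), Ordinal Hc));
          [rewrite mul0n; lia | rewrite inD /=; lia | rewrite ltcE /=; lia].
    * have Hc1b : c.+1 < b by lia.
      rewrite (@cond_false _ _ _ (Ordinal (isT : 0 < 2), Ordinal Hc1b));
          [rewrite mul0n; lia | rewrite inD /=; lia | rewrite ltcE /=; lia].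
  + have Hib : i < b by lia.
    rewrite (@Kc_zero _ _ _ (Ordinal (isT : 0 < 2), Ordinal Hc) (Ordinal (isT : 0 < 2), Ordinal Hib)).
    * rewrite muln0. lia.
    * by rewrite inU1 /= !eq_refl.
    * by rewrite inU1 inD /=; lia.
    * by rewrite ltcE /=; lia.
  + subst c. rewrite cond_true; last by cellt.
    rewrite (_ : _ |: _ = Dset b i.+1 j); last by apply/setP; cellt.
    rewrite IH //; lia.
- subst r. rewrite /=.
  case: (ltngtP c j) => Hcj.
  + case: (eqVneq c.+1 j) => Hc1.
    * rewrite cond_true; last by cellt.
      rewrite (_ : _ |: _ = Dset b i j); last by apply/setP; cellt.
      rewrite IH //; lia.
    * have Hc1b : c.+1 < b by lia.
      rewrite (@cond_false _ _ _ (Ordinal (isT : 1 < 2), Ordinal Hc1b));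
          [rewrite mul0n; lia | rewrite inD /=; lia | rewrite ltcE /=; lia].
  + have Hjb : j < b by lia.
    rewrite (@Kc_zero _ _ _ (Ordinal (isT : 1 < 2), Ordinal Hc) (Ordinal (isT : 1 < 2), Ordinal Hjb)).
    * rewrite muln0. lia.
    * by rewrite inU1 /= !eq_refl.
    * by rewrite inU1 inD /=; lia.
    * by rewrite ltcE /=; lia.
  + subst c. case: (ltnP j i) => Hji.
    * rewrite cond_true; last by cellt.
      rewrite (_ : _ |: _ = Dset b i j.+1); last by apply/setP; cellt.
      rewrite IH //; lia.
    * rewrite (@Kc_zero _ _ _ (Ordinal (isT : 1 < 2), Ordinal Hc) (Ordinal (isT : 0 < 2), Ordinal Hc)).
      - rewrite muln0. lia.
      - by rewrite inU1 /= !eq_refl.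
      - by rewrite inU1 inD /=; lia.
      - by rewrite ltcE /=; lia.
Qed.

Lemma sum_eq N (t X : nat) : \sum_(c < N) (c == t :> nat) * X = (t < N) * X.
Proof.
elim: N => [|N IH]; first by rewrite big_ord0.
rewrite big_ord_recr /= IH. lia.
Qed.

Lemma sum_eqS N (t X : nat) : \sum_(c < N) (c.+1 == t) * X = ((0 < t) && (t <= N)) * X.
Proof.
elim: N => [|N IH]; first by rewrite big_ord0; lia.
rewrite big_ord_recr /= IH. lia.
Qed.

Lemma sum_eq3 N (t Y X : nat) : \sum_(c < N) (c == t :> nat) * Y * X = (t < N) * Y * X.
Proof. rewrite -mulnA -sum_eq; apply: eq_bigr => c _; by rewrite mulnA. Qed.

Lemma sum_eqS3 N (t Y X : nat) : \sum_(c < N) (c.+1 == t) * Y * X = ((0 < t) && (t <= N)) * Y * X.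
Proof. rewrite -mulnA -sum_eqS; apply: eq_bigr => c _; by rewrite mulnA. Qed.

Lemma Wb_S b R i j : Wb b R.+1 i j =
  (i < b) * Wb b R i.+1 j + (j < i) * (Wb b R i j.+1 + Wb b R i j) + (0 < j) * Wb b R i j.
Proof. by []. Qed.

Lemma KW b M i j : j <= i <= b -> Kc b M (Dset b i j) = Wb b M i j.
Proof.
elim: M i j => [|M IH] i j Hij.
  rewrite Kc_0 /=. congr nat_of_bool.
  case: (eqVneq (Dset b i j) setT) => E.
  - apply/esym; apply/andP; split; apply/eqP.
    + case: (ltnP i b) => Hi; last lia.
      have := in_setT (Ordinal (isT : 0 < 2), Ordinal Hi). rewrite -E inD /=. lia.
    + case: (ltnP j b) => Hj; last lia.
      have := in_setT (Ordinal (isT : 1 < 2), Ordinal Hj). rewrite -E inD /=. lia.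
  - apply/esym/negbTE/negP => /andP [/eqP Hi /eqP Hj]. move/eqP: E; apply.
    apply/setP => [[[x ?] [y ?]]]. rewrite inD in_setT /=. lia.
rewrite Kc_S.
under eq_bigr => v _ do rewrite pt //.
rewrite (eq_bigr (fun p : cellb b => gW b M i j (p.1, p.2))); last by case.
rewrite -(pair_bigA _ (fun r c => gW b M i j (r, c))) /=.
rewrite big_ord_recr big_ord_recr big_ord0 /= add0n.
rewrite /gW /=.
rewrite !big_split /=.
rewrite sum_eq sum_eqS sum_eq3 sum_eqS3. lia.
Qed.

Lemma forall_inU1 (T : finType) (v : T) (D : {set T}) (P : pred T) :
  [forall u in v |: D, P u] = P v && [forall u in D, P u].
Proof.
apply/forall_inP/andP => [H|[Hv /forall_inP H] u].
  split; first by apply: H; rewrite setU11.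
  by apply/forall_inP => u Hu; apply: H; rewrite inE Hu orbT.
by rewrite in_setU1 => /orP [/eqP ->|/H].
Qed.

Lemma ok_char b (D : {set cellb b}) t : ok D t =
  [&& pairwise (fun x y => ~~ ltc y x) t,
      all (fun v => [forall u in D, ~~ ltc v u]) t &
      [forall u, (u \in D) || (u \in t)]].
Proof.
elim: t D => [|v t IH] D /=.
  apply/eqP/forallP => [->|H] //; first by move=> u; rewrite in_setT.
  by apply/setP => u; rewrite in_setT; have := H u; rewrite orbF.
rewrite IH.
have -> : all (fun w => [forall u in v |: D, ~~ ltc w u]) t =
          all (fun w => ~~ ltc w v) t && all (fun w => [forall u in D, ~~ ltc w u]) t.
  rewrite -all_predI; apply: eq_all => w /=; by rewrite forall_inU1.
have -> : [forall u, (u \in v |: D) || (u \in t)] = [forall u, (u \in D) || (u \in v :: t)].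
  apply: eq_forallb => u; by rewrite in_setU1 in_cons orbCA orbA.
by case: [forall u in D, _]; case: (all _ t); case: (pairwise _ t); rewrite ?andbF.
Qed.

Lemma pairwise_enum M (r : rel 'I_M) :
  pairwise r (enum 'I_M) = [forall x : 'I_M, forall y : 'I_M, (x < y)%N ==> r x y].
Proof.
case: M r => [|M] r.
  by rewrite enum_ord0 /=; apply/esym/forallP => [[]].
apply/(pairwiseP ord0)/forallP => [H x|H x y Hx Hy Hxy].
  apply/forallP => y; apply/implyP => Hxy.
  have := H x y. rewrite !inE !size_enum_ord !ltn_ord !nth_ord_enum. by apply.
have Hx' : x < M.+1 by move: Hx; rewrite inE size_enum_ord.
have Hy' : y < M.+1 by move: Hy; rewrite inE size_enum_ord.
have -> : nth ord0 (enum 'I_M.+1) x = Ordinal Hx' by apply/val_inj; rewrite /= nth_enum_ord.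
have -> : nth ord0 (enum 'I_M.+1) y = Ordinal Hy' by apply/val_inj; rewrite /= nth_enum_ord.
by have := H (Ordinal Hx'); move/forallP => /(_ (Ordinal Hy')) /implyP; apply.
Qed.


Definition toS b k (c : {ffun entryT [:: b; b] k -> cellb b}) :
  {ffun cellT [:: b; b] -> {set entryT [:: b; b] k}} :=
  [ffun u => [set x | c x == u]].

Lemma indiag b (u : cellT [:: b; b]) : in_diagram u.
Proof. move: u => [[r Hr] c]; rewrite /in_diagram /=; case: r Hr => [|[|r]] Hr //=; exact: ltn_ord. Qed.

Lemma ok_pos b M (c : {ffun 'I_M -> cellb b}) : ok set0 (sq c) =
  [forall x : 'I_M, forall y : 'I_M, (x < y)%N ==> ~~ ltc (c y) (c x)] &&
  [forall u, exists x, c x == u].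
Proof.
rewrite ok_char /sq pairwise_map pairwise_enum.
have -> : all (fun v => [forall u in (set0 : {set cellb b}), ~~ ltc v u]) [seq c i | i <- enum 'I_M].
  by apply/allP => v _; apply/forall_inP => u; rewrite inE.
congr andb; rewrite /=.
apply: eq_forallb => u; rewrite inE /=.
apply/mapP/existsP => [[x _ ->]|[x /eqP <-]]; first by exists x.
by exists x; rewrite ?mem_enum.
Qed.

Lemma sv_ok b k (c : {ffun entryT [:: b; b] k -> cellb b}) :
  is_svSYT (toS c) = ok set0 (sq c).
Proof.
rewrite ok_pos /is_svSYT.
have -> : [forall u, ~~ in_diagram u ==> (toS c u == set0)].
  by apply/forallP => u; rewrite indiag.
have -> : [forall x, #|[set u | in_diagram u & x \in toS c u]| == 1].
  apply/forallP => x; apply/cards1P; exists (c x); apply/setP => u.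
  by rewrite !inE indiag ffunE inE eq_sym.
have E1 : [forall u, in_diagram u ==> (toS c u != set0)] = [forall u, exists x, c x == u].
  apply: eq_forallb => u; rewrite indiag /= ffunE.
  apply/set0Pn/existsP => [[x]|[x Hx]]; [rewrite inE => Hx; by exists x | exists x; by rewrite inE].
have E2 : [forall u, forall v, [&& in_diagram u, in_diagram v, u != v,
     (u.1 <= v.1)%N & (u.2 <= v.2)%N] ==>
     [forall a, forall b, (a \in toS c u) && (b \in toS c v) ==> (a < b)%N]] =
   [forall x : entryT [:: b; b] k, forall y : entryT [:: b; b] k, (x < y)%N ==> ~~ ltc (c y) (c x)].
apply/idP/idP.
- move=> /forallP H; apply/forallP => x; apply/forallP => y; apply/implyP => Hxy.
  apply/negP => Hl.
  have H' := (forallP (H (c y))) (c x).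
  move: Hl; rewrite /ltc => /and3P [H1 H2 H3].
  move: H'; rewrite !indiag H1 H2 H3 /= => H'.
  have H'' := (forallP ((forallP H') y)) x.
  move: H''; rewrite !ffunE !inE !eq_refl /=. move=> Hyx; have := ltn_trans Hxy Hyx; by rewrite ltnn.
- move=> /forallP H; apply/forallP => u; apply/forallP => v; apply/implyP.
  rewrite !indiag /= => /and3P [Huv H1 H2].
  apply/forallP => a; apply/forallP => b0; apply/implyP.
  rewrite !ffunE !inE => /andP [/eqP Ha /eqP Hb].
  case: (ltngtP a b0) => // Hab.
  + have := (forallP (H b0)) a. rewrite Hab /= Ha Hb.
    by rewrite /ltc Huv H1 H2.
  + have Eab : a = b0 by apply/val_inj.
    by move: Huv; rewrite -Ha -Hb Eab eq_refl.
rewrite E1 E2 /=. by case: [forall x, _]; case: [forall x, _].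
Qed.

Lemma nSV_K b k : nSVSYT [:: b.+1; b.+1] k = Kc b.+1 (sumn [:: b.+1; b.+1] + k) set0.
Proof.
rewrite /nSVSYT /Kc.
have -> : [set S | is_svSYT S] = (@toS b.+1 k) @: [set c : {ffun entryT [:: b.+1; b.+1] k -> cellb b.+1} | ok set0 (sq c)].
  apply/setP => S; rewrite inE; apply/idP/imsetP.
  - move=> HS.
    pose c := [ffun x => odflt (ord0, ord0) [pick u | x \in S u]] : {ffun entryT [:: b.+1; b.+1] k -> cellb b.+1}.
    have Hc : toS c = S.
      move: (HS) => /andP [/andP [/andP [_ _] /forallP H3] _].
      apply/ffunP => u; apply/setP => x; rewrite !ffunE inE.
      have /cards1P [u0 Hu0] := H3 x.
      have Hm : forall w, (x \in S w) = (w == u0).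
        move=> w; have := congr1 (fun A : {set cellT [:: b.+1; b.+1]} => w \in A) Hu0; by rewrite /= !inE indiag.
      rewrite /c ffunE. case: (pickP (fun u => x \in S u)) => [u' Hu'|Hnone] /=.
      + by rewrite Hm; move: Hu'; rewrite Hm => /eqP ->; rewrite eq_sym.
      + by have := Hnone u0; rewrite /= Hm eq_refl.
    exists c; last by rewrite Hc.
    by rewrite inE -sv_ok Hc.
  - by move=> [c]; rewrite inE -sv_ok => H ->.
rewrite card_imset //.
move=> c1 c2 E; apply/ffunP => x.
have := congr1 (fun S : {ffun cellT [:: b.+1; b.+1] -> {set entryT [:: b.+1; b.+1] k}} => x \in S (c1 x)) E.
rewrite /= !ffunE !inE eq_refl => /esym/eqP.
by [].
Qed.

Lemma inner_sum n t C : (n < t -> C = 0) ->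
  \sum_(0 <= k < n.+1 | t + k == n) C = C.
Proof.
move=> H0. case: (ltnP n t) => H.
  rewrite H0 // big1 // => k _; done.
rewrite big_mkcond big_mkord /=.
rewrite (eq_bigr (fun k : 'I_n.+1 => (k == n - t :> nat) * C)); last first.
  by move=> k _; case: ifP => /eqP E; rewrite ?mul1n ?mul0n; lia.
rewrite sum_eq. lia.
Qed.

Lemma nSV_W b k : nSVSYT [:: b.+1; b.+1] k = Wb b.+1 (sumn [:: b.+1; b.+1] + k) 0 0.
Proof.
rewrite nSV_K -KW //.
congr Kc. by apply/setP => u; rewrite inE inD; lia.
Qed.

Theorem mainTheorem1 (n : nat) (hn : 2 <= n) :
  \sum_(1 <= b < n.+1) \sum_(0 <= k < n.+1 | 2 * b + k == n) nSVSYT [:: b; b] k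
  = Catalan n.-1.
Proof.
case: n hn => [|[|m]] // _.
rewrite big_add1 /=.
rewrite (eq_bigr (fun b => Wb b.+1 m.+2 0 0)); last first.
  move=> b _.
  rewrite (eq_bigr (fun k => Wb b.+1 m.+2 0 0)); last first.
    move=> k /eqP Hk. rewrite nSV_W. congr Wb. rewrite /=. lia.
  apply: inner_sum => H. apply: Wb_zero2. lia.
have E := Wu_sum m.+2 (leqnn 0).
rewrite add0n big_nat_recl // in E.
rewrite (_ : Wb 0 m.+2 0 0 = 0) // add0n in E.
by rewrite -E Wu_00 P_cat.
Qed.
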